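(* Let $X$ be a digraph containing a set of $m$ vertices no two of which form a digon. Then $\eta^+(X)\ge\lceil m/2\rceil$ and $\eta^-(X)\ge \lceil m/2\rceil$.
   Context: A digraph $X$ has a finite vertex set and an arc set of ordered pairs of distinct vertices; $\{x,y\}$ is a digon if both $xy,yx$ are arcs. The Hermitian adjacency matrix $H(X)$ has $(u,v)$-entry $1$ if $uv$ and $vu$ are arcs, $i$ if only $uv$ is an arc, $-i$ if only $vu$ is an arc, and $0$ otherwise. $\eta^+(X)$ (resp. $\eta^-(X)$) is the number of non-negative (resp. non-positive) eigenvalues of $H(X)$, counted with multiplicity. *)

(* Defs.v *)
From HB Require Import structures.
From mathcomp Require Import all_boot all_order all_algebra all_field.
Set Implicit Arguments. Unset Strict Implicit. Unset Printing Implicit Defensive.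
Import Order.TTheory GRing.Theory Num.Theory.
Local Open Scope ring_scope.

Definition digraph_ok n (arc : rel 'I_n) : Prop := irreflexive arc.

Definition digon n (arc : rel 'I_n) (u v : 'I_n) : bool := arc u v && arc v u.

Definition herm_adj n (arc : rel 'I_n) : 'M[algC]_n :=
  \matrix_(u, v)
    (if arc u v && arc v u then 1
     else if arc u v then 'i
     else if arc v u then - 'i
     else 0).

(* The eigenvalues of a square complex matrix, listed with multiplicity:
   the roots of its characteristic polynomial (defined up to permutation). *)
Definition eigenvalues n (A : 'M[algC]_n) : seq algC :=
  sval (closed_field_poly_normal (char_poly A)).

Definition eta_plus n (arc : rel 'I_n) : nat :=
  count (fun z : algC => 0 <= z) (eigenvalues (herm_adj arc)).
Definition eta_minus n (arc : rel 'I_n) : nat :=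
  count (fun z : algC => z <= 0) (eigenvalues (herm_adj arc)).

(* Main.v *)
Require Import Defs.
From HB Require Import structures.
From mathcomp Require Import all_boot all_order all_algebra all_field.
From mathcomp Require Import zify.
Set Implicit Arguments. Unset Strict Implicit. Unset Printing Implicit Defensive.
Import Order.TTheory GRing.Theory Num.Theory Num.Def.
Local Open Scope ring_scope.
Local Open Scope sesquilinear_scope.

Definition form n (A : 'M[algC]_n) (x : 'rV_n) : algC := (x *m A *m x^t*) 0 0.

Lemma rowsub_mulC m n k k' (f : 'I_k -> 'I_m) (g : 'I_k' -> 'I_m)
  (A B : 'M[algC]_(m, n)) :
  rowsub f A *m (rowsub g B)^t* = mxsub f g (A *m B^t*).
Proof. by apply/matrixP => i j; rewrite !mxE; apply: eq_bigr => l _; rewrite !mxE. Qed.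

Lemma unitary_rowsub n k (f : 'I_k -> 'I_n) (P : 'M[algC]_n) :
  injective f -> P \is unitarymx -> rowsub f P \is unitarymx.
Proof.
move=> finj /unitarymxP PP; apply/unitarymxP; rewrite rowsub_mulC PP.
by apply/matrixP => i j; rewrite !mxE (inj_eq finj).
Qed.

Lemma form_diag n (d : 'rV[algC]_n) y :
  form (diag_mx d) y = \sum_j d 0 j * (y 0 j * (y 0 j)^*).
Proof.
rewrite /form mul_mx_diag mxE; apply: eq_bigr => j _; rewrite !mxE.
by rewrite mulrCA mulrA.
Qed.

Lemma form_mul n k (A : 'M[algC]_n) (E : 'M_(k, n)) y :
  form A (y *m E) = form (E *m A *m E^t*) y.
Proof. by rewrite /form trmx_mul map_mxM !mulmxA. Qed.

Lemma mxsub_diag n k (f : 'I_k -> 'I_n) (d : 'rV[algC]_n) :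
  injective f -> mxsub f f (diag_mx d) = diag_mx (\row_i d 0 (f i)).
Proof. by move=> finj; apply/matrixP => i j; rewrite !mxE (inj_eq finj). Qed.

Lemma form_spec n k (P : 'M[algC]_n) (d : 'rV_n) (f : 'I_k -> 'I_n) x :
  P \is unitarymx -> injective f ->
  form (P^t* *m diag_mx d *m P) (x *m rowsub f P) =
  \sum_i d 0 (f i) * (x 0 i * (x 0 i)^*).
Proof.
move=> /unitarymxP PP finj; rewrite form_mul mul_rowsub_mx rowsub_mulC.
rewrite !mulmxA PP mul1mx -!mulmxA PP mulmx1 mxsub_diag // form_diag.
by apply: eq_bigr => i _; rewrite mxE.
Qed.
Lemma upper_W n k (P : 'M[algC]_n) (d : 'rV_n) (W : 'M_(k,n)) :
  P \is unitarymx -> (forall j, d ord0 j \is Num.real) ->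
  (forall x : 'rV_k, 0 <= form (P^t* *m diag_mx d *m P) (x *m W)) ->
  (\rank W <= #|[set j | (0 <= d ord0 j)%R]|)%N.
Proof.
move=> Pu dreal Wpos.
pose Neg := [set j | (d ord0 j < 0)%R].
pose f := (@fintype.enum_val _ (mem Neg)) : 'I_#|Neg| -> 'I_n.
have finj : injective f by exact: fintype.enum_val_inj.
pose N := rowsub f P.
have rN : \rank N = #|Neg| by rewrite mxrank_unitary // unitary_rowsub.
have cap : (W :&: N)%MS = 0.
  apply/eqP/rowV0P => z; rewrite sub_capmx => /andP[/submxP[x ->] /submxP[y ezy]].
  have h1 := Wpos x; rewrite ezy form_spec // in h1.
  have tle : forall i, d ord0 (f i) * (y 0 i * (y 0 i)^*) <= 0.
    move=> i; have : f i \in Neg by exact: fintype.enum_valP.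
    rewrite inE => dneg; by rewrite nmulr_rle0 // mul_conjC_ge0.
  have h2 : \sum_i d ord0 (f i) * (y 0 i * (y 0 i)^*) <= 0 by apply: sumr_le0 => i _; exact: tle.
  have h3 : \sum_i - (d ord0 (f i) * (y 0 i * (y 0 i)^*)) = 0.
    by rewrite sumrN; apply/eqP; rewrite oppr_eq0 eq_le h2 h1.
  have y0 : y = 0.
    apply/rowP => i; rewrite mxE.
    have hz : forall i, - (d ord0 (f i) * (y 0 i * (y 0 i)^*)) = 0.
      move=> j; apply: (psumr_eq0P _ h3) => // l _; rewrite oppr_ge0; exact: tle.
    have := hz i.
    have dn : d ord0 (f i) != 0.
      have : f i \in Neg by exact: fintype.enum_valP.
      by rewrite inE => /lt_eqF ->.
    by move/eqP; rewrite oppr_eq0 mulf_eq0 mul_conjC_eq0 (negPf dn) /= => /eqP.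
  by rewrite ezy y0 mul0mx.
have := mxrank_disjoint_sum cap; have := rank_leq_col (W + N)%MS.
have : [set j | (0 <= d ord0 j)%R] = ~: Neg.
  by apply/setP => j; rewrite !inE (real_ltNge (dreal j) (real0 _)) negbK.
move=> ->; have := cardsC Neg; rewrite card_ord rN.
move=> h1 h2 h3; rewrite h3 in h2; lia.
Qed.

Lemma char_poly_spec n (P : 'M[algC]_n) (d : 'rV_n) : P \in unitmx ->
  char_poly (invmx P *m diag_mx d *m P) = \prod_i ('X - (d ord0 i)%:P).
Proof.
move=> Pu; rewrite /char_poly.
have -> : char_poly_mx (invmx P *m diag_mx d *m P) =
   map_mx polyC (invmx P) *m char_poly_mx (diag_mx d) *m map_mx polyC P.
  rewrite /char_poly_mx mulmxBr mulmxBl -!map_mxM mul_mx_scalar -scalemxAl.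
  by rewrite -map_mxM mulVmx // map_mx1 scalemx1.
rewrite det_mulmx det_mulmx !det_map_mx mulrC mulrA -rmorphM.
rewrite -det_mulmx mulmxV // det1 rmorph1 mul1r.
rewrite -/(char_poly (diag_mx d)) char_poly_trig ?diag_mx_is_trig //.
by apply: eq_bigr => i _; rewrite mxE eqxx mulr1n.
Qed.

Lemma char_poly_tr n (A : 'M[algC]_n) : char_poly A^T = char_poly A.
Proof.
rewrite /char_poly -det_tr; congr (\det _).
by apply/matrixP => i j; rewrite !mxE eq_sym.
Qed.

Lemma count_card n (d : 'rV[algC]_n) (p : pred algC) :
  count p [seq d ord0 j | j <- index_enum 'I_n] = #|[set j | p (d ord0 j)]|.
Proof.
rewrite count_map cardsE cardE /enum_mem size_filter /index_enum unlock.
by apply: eq_count => x.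
Qed.

Lemma eig_count n (A : 'M[algC]_n) (P : 'M[algC]_n) (d : 'rV_n) (p : pred algC) :
  P \in unitmx -> A = invmx P *m diag_mx d *m P ->
  count p (eigenvalues A) = #|[set j | p (d ord0 j)]|.
Proof.
move=> Pu ->; rewrite -count_card /eigenvalues.
case: closed_field_poly_normal => r /=.
rewrite (monicP (char_poly_monic _)) scale1r char_poly_spec //.
rewrite -(big_map (fun j => d ord0 j) xpredT (fun z => 'X - z%:P)).
by move=> /prod_XsubC_eq /permP ->.
Qed.

Lemma spec_neg n (P : 'M[algC]_n) (d : 'rV_n) :
  P^t* *m diag_mx (- d) *m P = - (P^t* *m diag_mx d *m P).
Proof.
have -> : diag_mx (- d) = - diag_mx d.
  by apply/matrixP => i j; rewrite !mxE mulNrn.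
by rewrite mulmxN mulNmx.
Qed.

Lemma spectral_dec n (A : 'M[algC]_n) : A \is hermsymmx ->
  exists P : 'M[algC]_n, exists d : 'rV_n,
  [/\ P \is unitarymx, A = P^t* *m diag_mx d *m P & forall j, d ord0 j \is Num.real].
Proof.
move=> hA; exists (spectralmx A), (spectral_diag A); split.
- exact: spectral_unitarymx.
- rewrite -invmx_unitary ?spectral_unitarymx //.
  exact/orthomx_spectralP/hermitian_normalmx.
- by move=> j; have /mxOverP := hermitian_spectral_diag_real hA; apply.
Qed.

Lemma sym_count m (B : 'M[algC]_m) (P : 'M[algC]_m) (d : 'rV_m) :
  P \is unitarymx -> B = P^t* *m diag_mx d *m P -> (forall j, d ord0 j \is Num.real) ->
  - B = B^T -> (m <= (#|[set j | (0 <= d ord0 j)%R]|).*2)%N.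
Proof.
move=> Pu hB dr hT.
have Pun := unitarymx_unit Pu.
have e1 := @eig_count _ B P d (fun z => 0 <= z) Pun.
rewrite invmx_unitary // in e1; have {}e1 := e1 hB.
have e2 := @eig_count _ (- B) P (- d) (fun z => 0 <= z) Pun.
rewrite invmx_unitary // spec_neg -hB in e2; have {}e2 := e2 erefl.
have ee : eigenvalues (- B) = eigenvalues B by rewrite /eigenvalues hT char_poly_tr.
rewrite ee e1 in e2.
have hs : [set j | (0 <= (- d) ord0 j)%R] = [set j | (d ord0 j <= 0)%R].
  by apply/setP => j; rewrite !inE mxE oppr_ge0.
rewrite hs in e2.
have hU : [set j | (0 <= d ord0 j)%R] :|: [set j | (d ord0 j <= 0)%R] = setT.
  by apply/setP => j; rewrite !inE -realE dr.
have := cardsUI [set j | (0 <= d ord0 j)%R] [set j | (d ord0 j <= 0)%R].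
rewrite hU cardsT card_ord -e2 -addnn.
move=> h; have : (#|[set j | (0 <= d ord0 j)%R] :&: [set j | (d ord0 j <= 0)%R]| <= #|[set j | (0 <= d ord0 j)%R]|)%N.
  by apply: subset_leq_card; apply/subsetP => j; rewrite !inE => /andP[].
by move=> _; rewrite -h leq_addr.
Qed.

Lemma lower_side n m (H P : 'M[algC]_n) (d : 'rV_n) (E : 'M_(m,n)) (PS : 'M_m) (dS : 'rV_m) :
  P \is unitarymx -> PS \is unitarymx -> E \is unitarymx ->
  H = P^t* *m diag_mx d *m P -> E *m H *m E^t* = PS^t* *m diag_mx dS *m PS ->
  (forall j, d ord0 j \is Num.real) ->
  (#|[set j | (0 <= dS ord0 j)%R]| <= #|[set j | (0 <= d ord0 j)%R]|)%N.
Proof.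
move=> Pu PSu Eu hH hS dr.
pose G := [set j | (0 <= dS ord0 j)%R].
pose g := (@fintype.enum_val _ (mem G)) : 'I_#|G| -> 'I_m.
have ginj : injective g by exact: fintype.enum_val_inj.
pose W := rowsub g PS *m E.
have Wu : W \is unitarymx by rewrite mul_unitarymx // unitary_rowsub.
rewrite -(mxrank_unitary Wu); apply: (upper_W Pu dr) => x.
rewrite -hH mulmxA form_mul hS form_spec //; apply: sumr_ge0 => i _.
apply: mulr_ge0; last exact: mul_conjC_ge0.
have : g i \in G by exact: fintype.enum_valP.
by rewrite inE.
Qed.

Lemma herm_entry n (arc : rel 'I_n) (u v : 'I_n) :
  herm_adj arc v u = conjC (herm_adj arc u v).
Proof.
rewrite /herm_adj !mxE; case: (arc u v); case: (arc v u) => /=.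
- by rewrite rmorph1.
- exact: (esym (conjCi _)).
- by rewrite -[LHS]conjCK; congr (conjC _); exact: (conjCi _).
- by rewrite rmorph0.
Qed.

Lemma herm_herm n (arc : rel 'I_n) : herm_adj arc \is hermsymmx.
Proof.
apply/is_hermitianmxP; rewrite expr0 scale1r; apply/matrixP => u v.
by rewrite [RHS]mxE [X in conjC X]mxE -herm_entry.
Qed.

Lemma unitary1 n : (1%:M : 'M[algC]_n) \is unitarymx.
Proof. by apply/unitarymxP; rewrite trmx1 map_mx1 mulmx1. Qed.

Theorem theorem4p3 (n : nat) (arc : rel 'I_n) (S : {set 'I_n}) :
  digraph_ok arc ->
  (forall u v, u \in S -> v \in S -> ~~ digon arc u v) ->
  (uphalf #|S| <= eta_plus arc)%N /\ (uphalf #|S| <= eta_minus arc)%N.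
Proof.
move=> _ nod.
set H := herm_adj arc.
have nodE : forall u v, u \in S -> v \in S -> H v u = - H u v.
  move=> u v uS vS; have := nod u v uS vS; rewrite /digon /H /herm_adj !mxE.
  case: (arc u v); case: (arc v u); rewrite /= ?oppr0 ?opprK //.
pose v := (@fintype.enum_val _ (mem S)) : 'I_#|S| -> 'I_n.
have vinj : injective v by exact: fintype.enum_val_inj.
have vS : forall i, v i \in S by move=> i; exact: fintype.enum_valP.
pose E := rowsub v (1%:M : 'M[algC]_n).
have Eu : E \is unitarymx by rewrite unitary_rowsub // unitary1.
pose HS := mxsub v v H.
have hE : E *m H *m E^t* = HS.
  by rewrite mul_rowsub_mx mul1mx rowsub_mulC trmx1 map_mx1 mulmx1.
have HSh : HS \is hermsymmx.
  apply/is_hermitianmxP; rewrite expr0 scale1r; apply/matrixP => i j.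
  have := herm_entry arc (v j) (v i); rewrite /herm_adj !mxE; exact.
have HST : - HS = HS^T.
  apply/matrixP => i j; have := nodE (v i) (v j) (vS i) (vS j).
  by rewrite /HS /H /herm_adj !mxE => ->.
have [P [d [Pu hH dr]]] := spectral_dec (herm_herm arc).
have [PS [dS [PSu hS dSr]]] := spectral_dec HSh.
have Pun := unitarymx_unit Pu.
have hH' : herm_adj arc = invmx P *m diag_mx d *m P by rewrite invmx_unitary.
have c1 := sym_count PSu hS dSr HST.
have c2 : (#|S| <= (#|[set j | (0 <= (- dS) ord0 j)%R]|).*2)%N.
  have := @sym_count _ (- HS) PS (- dS) PSu.
  rewrite spec_neg -hS; apply => //.
    by move=> j; rewrite mxE rpredN.
  have -> : (- HS)^T = - HS^T by apply/matrixP => i j; rewrite !mxE.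
  by rewrite -HST.
split.
- apply: leq_trans (_ : #|[set j | (0 <= dS ord0 j)%R]| <= _)%N.
    by rewrite leq_uphalf_double.
  rewrite /eta_plus (eig_count _ Pun hH').
  by apply: (lower_side Pu PSu Eu hH _ dr); rewrite hE hS.
- apply: leq_trans (_ : #|[set j | (0 <= (- dS) ord0 j)%R]| <= _)%N.
    by rewrite leq_uphalf_double.
  rewrite /eta_minus (eig_count _ Pun hH').
  have -> : [set j | (d ord0 j <= 0)%R] = [set j | (0 <= (- d) ord0 j)%R].
    by apply/setP => j; rewrite !inE mxE oppr_ge0.
  apply: (lower_side (H := - H) Pu PSu Eu).
  + by rewrite spec_neg -hH.
  + by rewrite mulmxN mulNmx hE hS spec_neg.
  + by move=> j; rewrite mxE rpredN.
Qed.
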